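(* Let $(\mathscr C,A,\psi)$ be an entwining structure with $A$ finite dimensional over $K$, and suppose there exists a normalized cointegral $\gamma=\{\gamma_X:A^*\otimes\mathscr C(X,X)\to A\}_{X\in Ob(\mathscr C)}$ on $(\mathscr C,A,\psi)$. Then (a) the forgetful functor $G_\psi:Com^{\mathscr C}_A(\psi)\to Com^{\mathscr C}$ is a semisimple functor, and (b) $G_\psi$ is a Maschke functor.
   Context: $K$ is a field. A $K$-coalgebra with several objects $\mathscr C$: a set $Ob(\mathscr C)$, vector spaces $\mathscr C(X,Y)$, linear comultiplications $\delta_{XYZ}:\mathscr C(X,Z)\to\mathscr C(Y,Z)\otimes\mathscr C(X,Y)$ and counits $\epsilon_X:\mathscr C(X,X)\to K$, with $(\delta_{YWZ}\otimes\mathrm{id})\delta_{XYZ}=(\mathrm{id}\otimes\delta_{XYW})\delta_{XWZ}$ and $(\epsilon_Y\otimes\mathrm{id})\delta_{XYY}=\mathrm{id}=(\mathrm{id}\otimes\epsilon_X)\delta_{XXY}$. For a $K$-algebra $A$ (multiplication $\mu_A$, unit $u_A$), an entwining structure $(\mathscr C,A,\psi)$ is a family of linear maps $\psi_{XY}:\mathscr C(X,Y)\otimes A\to A\otimes\mathscr C(X,Y)$, $\psi_{XY}(f\otimes a)=a_\psi\otimes f^\psi$, with (i) $(\mathrm{id}_A\otimes\delta_{XYZ})\psi_{XZ}=(\psi_{YZ}\otimes\mathrm{id})(\mathrm{id}\otimes\psi_{XY})(\delta_{XYZ}\otimes\mathrm{id}_A)$; (ii) $\psi_{XZ}(\mathrm{id}\otimes\mu_A)=(\mu_A\otimes\mathrm{id})(\mathrm{id}_A\otimes\psi_{XZ})(\psi_{XZ}\otimes\mathrm{id}_A)$;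 (iii) $\psi_{XZ}(f\otimes1)=1\otimes f$; (iv) $\epsilon_Z(g^\psi)a_\psi=\epsilon_Z(g)a$. $Com^{\mathscr C}$: right $\mathscr C$-comodules (spaces $\mathcal M(X)$, coactions $\rho_{XY}(m)=m_{Y0}\otimes m_{Y1}\in\mathcal M(Y)\otimes\mathscr C(X,Y)$ with $(\rho_{ZY}\otimes\mathrm{id})\rho_{XZ}=(\mathrm{id}\otimes\delta_{XZY})\rho_{XY}$, $(\mathrm{id}\otimes\epsilon_X)\rho_{XX}=\mathrm{id}$) with coaction-compatible morphisms; abelian with exactness objectwise. $Com^{\mathscr C}_A(\psi)$: comodules with right $A$-module structures on each $\mathcal M(X)$ such that $\rho_{XY}(ma)=m_{Y0}a_\psi\otimes(m_{Y1})^\psi$, with $A$-linear comodule morphisms; $G_\psi$ forgets the $A$-actions. $coev_A:K\to A\otimes A^*$, $1\mapsto\sum_ia_i\otimes a_i^*$ (basis and dual basis). A normalized cointegral is a family of linear maps $\gamma_X:A^*\otimes\mathscr C(X,X)\to A$ with: (1) $(\mathrm{id}_A\otimes\psi_{XY})(\psi_{XY}\otimes\gamma_X)(\mathrm{id}\otimes coev_A\otimes\mathrm{id})\delta_{XXY}=(\mathrm{id}_A\otimes\gamma_Y\otimes\mathrm{id})(coev_A\otimes\delta_{XYY})$ as maps $\mathscr C(X,Y)\to A\otimes A\otimes\mathscr C(X,Y)$; (2) $(\mathrm{id}_A\otimes\mu_A)(\mathrm{id}_A\otimes\gamma_X\otimes\mathrm{id}_A)(coev_A\otimes\mathrm{id}\otimes\mathrm{id}_A)=(\mu_A\otimes\gamma_X)(\mathrm{id}_A\otimes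 coev_A\otimes\mathrm{id})\psi_{XX}$ as maps $\mathscr C(X,X)\otimes A\to A\otimes A$; (3) $\mu_A(\mathrm{id}_A\otimes\gamma_X)(coev_A\otimes\mathrm{id})=u_A\circ\epsilon_X$ on $\mathscr C(X,X)$. A functor $F:\mathcal D\to\mathcal D'$ between abelian categories is semisimple if every short exact sequence in $\mathcal D$ whose image under $F$ is split exact in $\mathcal D'$ splits in $\mathcal D$; it is Maschke if for all morphisms $i:X\to X'$, $f:X\to Y$ in $\mathcal D$ with $F(i)$ a split monomorphism in $\mathcal D'$ there is $g:X'\to Y$ with $g\circ i=f$. *)

(* Defs.v *)
From HB Require Import structures.
From mathcomp Require Import all_boot all_algebra falgebra.
Set Implicit Arguments. Unset Strict Implicit. Unset Printing Implicit Defensive.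
Import GRing.Theory.
Local Open Scope ring_scope.

(* MathComp has no tensor product of (possibly infinite dimensional)        *)
(* vector spaces.  An element of V (x) W is represented by a finite formal  *)
(* sum  sum_i v_i (x) w_i, i.e. a list of pairs; two formal sums represent  *)
(* the same tensor iff they agree under every pairing  phi (x) chi  with    *)
(* linear functionals phi, chi (over a field, the functionals phi (x) chi   *)
(* separate the points of V (x) W).  Same for triple tensor products.       *)
(* A linear map into a tensor product is a function into formal sums which  *)
(* is linear modulo this equivalence; a linear map out of a tensor product  *)
(* is a multilinear map (universal property).                               *)
Section Tensor.
Variable K : fieldType.

Definition tens (V W : lmodType K) := seq (V * W).
Definition tens3 (U V W : lmodType K) := seq (U * V * W).

Definition teq (V W : lmodType K) (s t : tens V W) : Prop :=
  forall (phi : {linear V -> K^o}) (chi : {linear W -> K^o}),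
    \sum_(p <- s) (phi p.1 : K) * chi p.2 = \sum_(p <- t) (phi p.1 : K) * chi p.2.

Definition teq3 (U V W : lmodType K) (s t : tens3 U V W) : Prop :=
  forall (phi : {linear U -> K^o}) (chi : {linear V -> K^o})
         (om : {linear W -> K^o}),
    \sum_(p <- s) (phi p.1.1 : K) * chi p.1.2 * om p.2
    = \sum_(p <- t) (phi p.1.1 : K) * chi p.1.2 * om p.2.

(* scalar multiple of a formal sum; addition is concatenation *)
Definition tscale (V W : lmodType K) (k : K) (s : tens V W) : tens V W :=
  [seq (k *: p.1, p.2) | p <- s].

Definition tlinear (U V W : lmodType K) (f : U -> tens V W) : Prop :=
  forall k u u', teq (f (k *: u + u')) (tscale k (f u) ++ f u').

(* f : U -> V -> W (x) Z is bilinear, i.e. a linear map U (x) V -> W (x) Z *)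
Definition tbilinear (U V W Z : lmodType K) (f : U -> V -> tens W Z) : Prop :=
  (forall v k u u', teq (f (k *: u + u') v) (tscale k (f u v) ++ f u' v)) /\
  (forall u k v v', teq (f u (k *: v + v')) (tscale k (f u v) ++ f u v')).

Definition plinear (U V : lmodType K) (f : U -> V) : Prop :=
  forall k u u', f (k *: u + u') = k *: f u + f u'.

End Tensor.

Section Coalgebra.
Local Unset Implicit Arguments.
Variables (K : fieldType) (I : Type) (C : I -> I -> lmodType K).
Variable delta : forall X Y Z, C X Z -> tens (C Y Z) (C X Y).
Variable eps : forall X, {linear C X X -> K^o}.

Definition is_coalgebra : Prop :=
  (forall X Y Z, tlinear (delta X Y Z)) /\
  (* (delta_YWZ (x) id) delta_XYZ = (id (x) delta_XYW) delta_XWZ *)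
  (forall X Y W Z (f : C X Z),
     teq3 [seq (q.1, q.2, p.2) | p <- delta X Y Z f, q <- delta Y W Z p.1]
          [seq (p.1, q.1, q.2) | p <- delta X W Z f, q <- delta X Y W p.2]) /\
  (forall X Y (f : C X Y), \sum_(p <- delta X Y Y f) (eps Y p.1 : K) *: p.2 = f) /\
  (forall X Y (f : C X Y), \sum_(p <- delta X X Y f) (eps X p.2 : K) *: p.1 = f).

(* Entwining structures (C, A, psi), psi_XY : C(X,Y) (x) A -> A (x) C(X,Y). *)
Variable A : falgType K.
Variable psi : forall X Y, C X Y -> A -> tens A (C X Y).

Definition is_entwining : Prop :=
  (forall X Y, tbilinear (psi X Y)) /\
  (forall X Y Z (f : C X Z) (a : A),
     teq3 [seq (p.1, q.1, q.2) | p <- psi X Z f a, q <- delta X Y Z p.2]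
          (flatten [seq [seq (r.1, r.2, q.2) | q <- psi X Y p.2 a,
                                                   r <- psi Y Z p.1 q.1]
                     | p <- delta X Y Z f])) /\
  (forall X Z (f : C X Z) (a b : A),
     teq (psi X Z f (a * b))
         [seq (p.1 * q.1, q.2) | p <- psi X Z f a, q <- psi X Z p.2 b]) /\
  (forall X Z (f : C X Z), teq (psi X Z f 1) [:: (1, f)]) /\
  (forall Z (g : C Z Z) (a : A),
     \sum_(p <- psi Z Z g a) (eps Z p.2 : K) *: p.1 = (eps Z g : K) *: a).

(* coev_A : K -> A (x) A^*,  1 |-> sum_i a_i (x) a_i^*  (A^* = 'Hom(A, K))   *)
Definition dimA := \dim (fullv : {vspace A}).
Definition abas (i : 'I_dimA) : A := (vbasis (fullv : {vspace A}))`_i.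
Definition adual (i : 'I_dimA) : 'Hom(A, K^o) :=
  linfun (coord (vbasis (fullv : {vspace A})) i : A -> K^o).

(* normalized cointegral gamma_X : A^* (x) C(X,X) -> A, given as bilinear maps *)
Definition is_normalized_cointegral
    (gamma : forall X, 'Hom(A, K^o) -> C X X -> A) : Prop :=
  (forall X (f : C X X), plinear (fun phi => gamma X phi f)) /\
  (forall X (phi : 'Hom(A, K^o)), plinear (gamma X phi)) /\
  (* (1) : maps C(X,Y) -> A (x) A (x) C(X,Y) *)
  (forall X Y (f : C X Y),
     teq3 (flatten [seq flatten
                     [seq [seq (q.1, r.1, r.2) | q <- psi X Y p.1 (abas i),
                             r <- psi X Y q.2 (gamma X (adual i) p.2)]
                     | i <- enum 'I_dimA] | p <- delta X X Y f])
          [seq (abas i, gamma Y (adual i) p.1, p.2) | i <- enum 'I_dimA,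
                                                      p <- delta X Y Y f]) /\
  (* (2) : maps C(X,X) (x) A -> A (x) A *)
  (forall X (f : C X X) (a : A),
     teq [seq (abas i, gamma X (adual i) f * a) | i <- enum 'I_dimA]
         [seq (p.1 * abas i, gamma X (adual i) p.2) | p <- psi X X f a,
                                                      i <- enum 'I_dimA]) /\
  (forall X (f : C X X),
     \sum_(i < dimA) abas i * gamma X (adual i) f = (eps X f : K) *: 1).

Record comod := Comod {
  cm_sp :> I -> lmodType K;
  cm_rho : forall X Y, cm_sp X -> tens (cm_sp Y) (C X Y);
  cm_rho_lin : forall X Y, tlinear (cm_rho X Y);
  cm_rho_coassoc : forall X Z Y (m : cm_sp X),
    teq3 [seq (q.1, q.2, p.2) | p <- cm_rho X Z m, q <- cm_rho Z Y p.1]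
         [seq (p.1, q.1, q.2) | p <- cm_rho X Y m, q <- delta X Z Y p.2];
  cm_rho_counit : forall X (m : cm_sp X),
    \sum_(p <- cm_rho X X m) (eps X p.2 : K) *: p.1 = m
}.

Definition comod_hom (M N : comod) (h : forall X, M X -> N X) : Prop :=
  (forall X, plinear (h X)) /\
  (forall X Y (m : M X),
     teq (cm_rho N X Y (h X m)) [seq (h Y p.1, p.2) | p <- cm_rho M X Y m]).

Record emod := EMod {
  em_cm :> comod;
  em_act : forall X, em_cm X -> A -> em_cm X;
  em_act_linl : forall X (a : A), plinear (fun m : em_cm X => em_act X m a);
  em_act_linr : forall X (m : em_cm X), plinear (fun a : A => em_act X m a);
  em_act1 : forall X (m : em_cm X), em_act X m 1 = m;
  em_actM : forall X (m : em_cm X) (a b : A), em_act X (em_act X m a) b = em_act X m (a * b);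
  em_compat : forall X Y (m : em_cm X) (a : A),
    teq (cm_rho em_cm X Y (em_act X m a))
        [seq (em_act Y p.1 q.1, q.2) | p <- cm_rho em_cm X Y m, q <- psi X Y p.2 a]
}.

Definition emod_hom (M N : emod) (h : forall X, M X -> N X) : Prop :=
  comod_hom M N h /\ (forall X (m : M X) (a : A), h X (em_act M X m a) = em_act N X (h X m) a).

Definition short_exact (M1 M2 M3 : comod)
    (f : forall X, M1 X -> M2 X) (g : forall X, M2 X -> M3 X) : Prop :=
  forall X, injective (f X) /\ (forall n : M3 X, exists m, g X m = n) /\
    (forall n : M2 X, g X n = 0 <-> exists m, f X m = n).

(* G_psi is semisimple: a short exact sequence in Com^C_A(psi) which splits
   in Com^C (as a sequence of comodules) splits in Com^C_A(psi). *)
Definition Gpsi_semisimple : Prop :=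
  forall (M1 M2 M3 : emod) (f : forall X, M1 X -> M2 X) (g : forall X, M2 X -> M3 X),
    emod_hom M1 M2 f -> emod_hom M2 M3 g -> short_exact M1 M2 M3 f g ->
    (exists r : forall X, M2 X -> M1 X,
        comod_hom M2 M1 r /\ forall X (m : M1 X), r X (f X m) = m) ->
    exists r : forall X, M2 X -> M1 X,
        emod_hom M2 M1 r /\ forall X (m : M1 X), r X (f X m) = m.

Definition Gpsi_Maschke : Prop :=
  forall (M M' N : emod) (i : forall X, M X -> M' X) (f : forall X, M X -> N X),
    emod_hom M M' i -> emod_hom M N f ->
    (exists r : forall X, M' X -> M X,
        comod_hom M' M r /\ forall X (m : M X), r X (i X m) = m) ->
    exists g : forall X, M' X -> N X,
        emod_hom M' N g /\ forall X (m : M X), g X (i X m) = f X m.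

End Coalgebra.

(* Main.v *)
Require Import Defs.
From HB Require Import structures.
From mathcomp Require Import all_boot all_algebra falgebra.
From mathcomp Require Import boolp classical_sets.
Set Implicit Arguments. Unset Strict Implicit. Unset Printing Implicit Defensive.
Import GRing.Theory.
Local Open Scope ring_scope.


Section Sep.
Local Open Scope classical_set_scope.
Variables (K : fieldType) (V : lmodType K).
Definition subsp (W : set V) := forall k u u', W u -> W u' -> W (k *: u + u').

Lemma subsp0 (W : set V) u : subsp W -> W u -> W 0.
Proof. by move=> sW Wu; have := sW (-1) u u Wu Wu; rewrite scaleN1r addNr. Qed.

Lemma max_compl (v : V) : v != 0 -> exists W : set V, subsp W /\ ~ W v /\
  forall x, exists w c, W w /\ x = w + c *: v.
Proof.
move=> v0.
pose P := fun W : set V => subsp W /\ ~ W v.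
have [A [[sA nAv] Amax]] : exists A, P A /\ forall B, A `<` B -> ~ P B.
  apply: Zorn_bigcup => F FP Ftot; split.
    move=> k u u' [X FX Xu] [Y FY Yu'].
    have [XY|YX] := Ftot X Y FX FY.
      by exists Y => //; apply: (FP Y FY).1 => //; apply: XY.
    by exists X => //; apply: (FP X FX).1 => //; apply: YX.
  by move=> [X FX Xv]; exact: (FP X FX).2 Xv.
have A0 : A 0.
  have [[u Au]|nA] := pselect (exists u, A u); first exact: subsp0 Au.
  exfalso; apply: (Amax [set 0]).
    split; first by move=> u Au; case: nA; exists u.
    by move=> /(_ 0 erefl) Ab; apply: nA; exists 0.
  split; first by move=> k u u' /= -> ->; rewrite scaler0 addr0.
  by move=> /= /eqP; rewrite (negbTE v0).
exists A; split => //; split => // x.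
apply: contrapT => nx.
pose B := [set y | exists w c, A w /\ y = w + c *: x].
have sB : subsp B.
  move=> k _ _ [w [c [Aw ->]]] [w' [c' [Aw' ->]]].
  exists (k *: w + w'), (k * c + c'); split; first exact: sA.
  by rewrite scalerDr scalerDl scalerA addrACA.
have xB : B x by exists 0, 1; rewrite scale1r add0r.
have nxA : ~ A x by move=> Ax; apply: nx; exists x, 0; rewrite scale0r addr0.
have AB : A `<` B.
  split; first by move=> w Aw; exists w, 0; rewrite scale0r addr0.
  by move=> /(_ x xB).
have Bv : B v by apply: contrapT => nBv; exact: (Amax B AB (conj sB nBv)).
case: Bv => w [c [Aw vE]].
have [c0|c0] := eqVneq c 0.
  by apply: nAv; rewrite vE c0 scale0r addr0.
apply: nx; exists ((- c^-1) *: w + 0), c^-1; split; first by apply: sA.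
by rewrite addr0 vE scalerDr scalerA mulVf // scale1r scaleNr addrA addNr add0r.
Qed.

Definition mkLin (f : V -> K^o) (H : linear f) : {linear V -> K^o} :=
  HB.pack f (GRing.isLinear.Build K V K^o *:%R f H).

Lemma functional_ex (v : V) : v != 0 -> exists phi : {linear V -> K^o}, phi v = 1.
Proof.
move=> /max_compl [W [sW [nWv dec]]].
have dec' x : exists c, exists w, W w /\ x = w + c *: v.
  by have [w [c H]] := dec x; exists c, w.
have [f fP] := choice dec'.
have uniq x w c : W w -> x = w + c *: v -> f x = c.
  move=> Ww xE; have [w' [Ww' xfE]] := fP x.
  apply: contrapT => /eqP ne; apply: nWv.
  have E : (f x - c) *: v = w - w'.
    rewrite scalerBl.
    have -> : f x *: v = x - w' by rewrite [in RHS]xfE addrAC subrr add0r.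
    have -> : c *: v = x - w by rewrite [in RHS]xE addrAC subrr add0r.
    by rewrite opprB addrC addrA subrK.
  have W0 : W 0 := subsp0 sW Ww.
  have Wn : W (- w') by have := sW (-1) _ _ Ww' W0; rewrite scaleN1r addr0.
  have Wd : W (w - w') by have := sW 1 _ _ Ww Wn; rewrite scale1r.
  have := sW ((f x - c)^-1) _ _ Wd W0.
  by rewrite addr0 -E scalerA mulVf ?subr_eq0 // scale1r.
have flin : linear (f : V -> K^o).
  move=> k x y /=.
  have [w1 [W1 E1]] := fP x; have [w2 [W2 E2]] := fP y.
  apply: (uniq _ (k *: w1 + w2)); first exact: sW.
  rewrite [in LHS]E1 [in LHS]E2 scalerDr scalerA.
  have -> : (k *: (f x : K^o) + (f y : K^o)) = k * f x + f y by [].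
  by rewrite scalerDl; exact: addrACA.
exists (mkLin flin) => /=.
have [w [_ [Ww _]]] := dec v.
by apply: (uniq v 0); [exact: subsp0 sW Ww|rewrite add0r scale1r].
Qed.

Lemma retract_ex (vs : seq V) : exists L : seq ({linear V -> K^o} * V),
  forall v, v \in vs -> v = \sum_(q <- L) (q.1 v : K) *: q.2.
Proof.
elim: vs => [|v vs [L HL]]; first by exists [::].
pose P u := \sum_(q <- L) (q.1 u : K) *: q.2.
have [v0|v0] := eqVneq (v - P v) 0.
  exists L => u; rewrite inE => /orP[/eqP ->|/HL //].
  by apply/eqP; rewrite -subr_eq0 v0.
have [psi psi1] := functional_ex v0.
exists ((psi, v - P v) :: [seq (q.1, q.2 - (psi q.2 : K) *: (v - P v)) | q <- L]).
have key u : \sum_(q <- (psi, v - P v) :: [seq (q.1, q.2 - (psi q.2 : K) *: (v - P v)) | q <- L])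
    (q.1 u : K) *: q.2 = P u + (psi (u - P u) : K) *: (v - P v).
  rewrite big_cons big_map /=.
  under eq_bigr do rewrite scalerDr scalerN scalerA.
  rewrite big_split /= sumrN -scaler_suml.
  have -> : \sum_(i <- L) ((i.1 u : K) * psi i.2) = psi (P u).
    by rewrite /P linear_sum; apply: eq_bigr => q _; rewrite linearZ.
  have -> : (psi (u - P u) : K) = psi u - psi (P u) by rewrite linearB.
  by rewrite scalerBl addrCA addrA.
move=> u; rewrite inE key => /orP[/eqP ->|/HL uE].
  by rewrite psi1 scale1r addrC subrK.
by rewrite /P -uE subrr linear0 scale0r addr0.
Qed.
End Sep.

Section TE.
Variable K : fieldType.
Implicit Types U V W Z : lmodType K.

Lemma plin0 U V (f : U -> V) : plinear f -> f 0 = 0.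
Proof.
move=> H; have := H 1 0 0; rewrite scaler0 addr0 scale1r => E.
by apply: (@addrI _ (f 0)); rewrite addr0 -E.
Qed.

Lemma plinD U V (f : U -> V) : plinear f -> forall x y, f (x + y) = f x + f y.
Proof. by move=> H x y; rewrite -[x in LHS]scale1r H scale1r. Qed.

Lemma plinZ U V (f : U -> V) : plinear f -> forall k x, f (k *: x) = k *: f x.
Proof. by move=> H k x; rewrite -[k *: x]addr0 H plin0 ?addr0. Qed.

Lemma plin_sum U V (f : U -> V) I (r : seq I) (P : pred I) (F : I -> U) :
  plinear f -> f (\sum_(i <- r | P i) F i) = \sum_(i <- r | P i) f (F i).
Proof.
move=> H; elim/big_rec2: _ => [|i y1 y2 _ <-]; first exact: plin0.
exact: plinD.
Qed.

Lemma plin_sumZ U V (f : U -> V) I (r : seq I) (c : I -> K) (F : I -> U) :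
  plinear f -> f (\sum_(i <- r) c i *: F i) = \sum_(i <- r) c i *: f (F i).
Proof. by move=> H; rewrite plin_sum //; apply: eq_bigr => i _; rewrite plinZ. Qed.


Definition bilin U V W (B : U -> V -> W) :=
  (forall v, plinear (fun u => B u v)) /\ (forall u, plinear (B u)).
Definition trilin U V W Z (B : U -> V -> W -> Z) :=
  (forall v w, plinear (fun u => B u v w)) /\ (forall u w, plinear (fun v => B u v w))
  /\ (forall u v, plinear (B u v)).

Lemma TE_exp V W U (s : tens V W) (B : V -> W -> U)
  (L1 : seq ({linear V -> K^o} * V)) (L2 : seq ({linear W -> K^o} * W)) :
  bilin B ->
  (forall p, p \in s -> p.1 = \sum_(q <- L1) (q.1 p.1 : K) *: q.2) ->
  (forall p, p \in s -> p.2 = \sum_(q <- L2) (q.1 p.2 : K) *: q.2) ->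
  \sum_(p <- s) B p.1 p.2 = \sum_(q <- L1) \sum_(q' <- L2)
     (\sum_(p <- s) (q.1 p.1 : K) * q'.1 p.2) *: B q.2 q'.2.
Proof.
move=> [B1 B2] H1 H2.
rewrite (eq_big_seq (fun p => \sum_(q <- L1) \sum_(q' <- L2)
     ((q.1 p.1 : K) * q'.1 p.2) *: B q.2 q'.2)); last first.
  move=> p Hp.
  have -> : B p.1 p.2 = B (\sum_(q <- L1) (q.1 p.1 : K) *: q.2)
                          (\sum_(q <- L2) (q.1 p.2 : K) *: q.2) by rewrite -H1 -?H2.
  rewrite (plin_sumZ _ _ _ (B1 _)); apply: eq_bigr => q _.
  rewrite (plin_sumZ _ _ _ (B2 _)) scaler_sumr; apply: eq_bigr => q' _.
  by rewrite scalerA.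
rewrite exchange_big; apply: eq_bigr => q _.
rewrite exchange_big; apply: eq_bigr => q' _.
by rewrite scaler_suml.
Qed.

Lemma TE V W U (s t : tens V W) (B : V -> W -> U) :
  bilin B -> teq s t -> \sum_(p <- s) B p.1 p.2 = \sum_(p <- t) B p.1 p.2.
Proof.
move=> HB st.
have [L1 H1] := retract_ex (map fst (s ++ t)).
have [L2 H2] := retract_ex (map snd (s ++ t)).
rewrite (TE_exp (L1 := L1) (L2 := L2)) //; first last.
- by move=> p Hp; apply: H2; apply: map_f; rewrite mem_cat Hp.
- by move=> p Hp; apply: H1; apply: map_f; rewrite mem_cat Hp.
rewrite (TE_exp (s := t) (L1 := L1) (L2 := L2)) //; first last.
- by move=> p Hp; apply: H2; apply: map_f; rewrite mem_cat Hp orbT.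
- by move=> p Hp; apply: H1; apply: map_f; rewrite mem_cat Hp orbT.
by apply: eq_bigr => q _; apply: eq_bigr => q' _; rewrite st.
Qed.

Lemma TE3_exp V W Z U (s : tens3 V W Z) (B : V -> W -> Z -> U)
  (L1 : seq ({linear V -> K^o} * V)) (L2 : seq ({linear W -> K^o} * W))
  (L3 : seq ({linear Z -> K^o} * Z)) :
  trilin B ->
  (forall p, p \in s -> p.1.1 = \sum_(q <- L1) (q.1 p.1.1 : K) *: q.2) ->
  (forall p, p \in s -> p.1.2 = \sum_(q <- L2) (q.1 p.1.2 : K) *: q.2) ->
  (forall p, p \in s -> p.2 = \sum_(q <- L3) (q.1 p.2 : K) *: q.2) ->
  \sum_(p <- s) B p.1.1 p.1.2 p.2 = \sum_(q <- L1) \sum_(q' <- L2) \sum_(q'' <- L3)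
     (\sum_(p <- s) (q.1 p.1.1 : K) * q'.1 p.1.2 * q''.1 p.2) *: B q.2 q'.2 q''.2.
Proof.
move=> [B1 [B2 B3]] H1 H2 H3.
rewrite (eq_big_seq (fun p => \sum_(q <- L1) \sum_(q' <- L2) \sum_(q'' <- L3)
     ((q.1 p.1.1 : K) * q'.1 p.1.2 * q''.1 p.2) *: B q.2 q'.2 q''.2)); last first.
  move=> p Hp.
  have -> : B p.1.1 p.1.2 p.2 = B (\sum_(q <- L1) (q.1 p.1.1 : K) *: q.2)
                          (\sum_(q <- L2) (q.1 p.1.2 : K) *: q.2)
                          (\sum_(q <- L3) (q.1 p.2 : K) *: q.2) by rewrite -H1 -?H2 -?H3.
  rewrite (plin_sumZ _ _ _ (B1 _ _)); apply: eq_bigr => q _.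
  rewrite (plin_sumZ _ _ _ (B2 _ _)) scaler_sumr; apply: eq_bigr => q' _.
  rewrite (plin_sumZ _ _ _ (B3 _ _)) scaler_sumr scaler_sumr; apply: eq_bigr => q'' _.
  by rewrite !scalerA.
rewrite exchange_big; apply: eq_bigr => q _.
rewrite exchange_big; apply: eq_bigr => q' _.
rewrite exchange_big; apply: eq_bigr => q'' _.
by rewrite scaler_suml.
Qed.

Lemma TE3 V W Z U (s t : tens3 V W Z) (B : V -> W -> Z -> U) :
  trilin B -> teq3 s t ->
  \sum_(p <- s) B p.1.1 p.1.2 p.2 = \sum_(p <- t) B p.1.1 p.1.2 p.2.
Proof.
move=> HB st.
have [L1 H1] := retract_ex (map (fun p => p.1.1) (s ++ t)).
have [L2 H2] := retract_ex (map (fun p => p.1.2) (s ++ t)).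
have [L3 H3] := retract_ex (map snd (s ++ t)).
rewrite (TE3_exp (L1 := L1) (L2 := L2) (L3 := L3)) //; first last.
- by move=> p Hp; apply: H3; apply: (map_f snd); rewrite mem_cat Hp.
- by move=> p Hp; apply: H2; apply: (map_f (fun p => p.1.2)); rewrite mem_cat Hp.
- by move=> p Hp; apply: H1; apply: (map_f (fun p => p.1.1)); rewrite mem_cat Hp.
rewrite (TE3_exp (s := t) (L1 := L1) (L2 := L2) (L3 := L3)) //; first last.
- by move=> p Hp; apply: H3; apply: (map_f snd); rewrite mem_cat Hp orbT.
- by move=> p Hp; apply: H2; apply: (map_f (fun p => p.1.2)); rewrite mem_cat Hp orbT.
- by move=> p Hp; apply: H1; apply: (map_f (fun p => p.1.1)); rewrite mem_cat Hp orbT.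
by apply: eq_bigr => q _; apply: eq_bigr => q' _; apply: eq_bigr => q'' _; rewrite st.
Qed.

End TE.


Section Comb.
Variable K : fieldType.
Implicit Types U V W Z : lmodType K.

Lemma plin_comp U V W (f : U -> V) (g : V -> W) :
  plinear f -> plinear g -> plinear (fun x => g (f x)).
Proof. by move=> Hf Hg k x y; rewrite Hf Hg. Qed.

Lemma plin_sumf U V J (r : seq J) (F : J -> U -> V) :
  (forall j, plinear (F j)) -> plinear (fun x => \sum_(j <- r) F j x).
Proof.
move=> HF k x y; rewrite scaler_sumr -big_split /=.
by apply: eq_bigr => j _; rewrite HF.
Qed.

Lemma plin_lin U (phi : {linear U -> K^o}) : plinear (phi : U -> K^o).
Proof. by move=> k x y; rewrite linearP. Qed.

Lemma plin_mulr U (f : U -> K^o) (c : K) :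
  plinear f -> plinear (fun x => (f x * c : K^o)).
Proof. by move=> H k x y; rewrite H /= mulrDl -mulrA. Qed.

Lemma plin_mull U (f : U -> K^o) (c : K) :
  plinear f -> plinear (fun x => (c * f x : K^o)).
Proof. by move=> H k x y; rewrite H /= mulrDr mulrCA. Qed.

Lemma plin_tsum U V W Z (f : U -> tens V W) (G : V -> W -> Z) :
  tlinear f -> bilin G -> plinear (fun u => \sum_(p <- f u) G p.1 p.2).
Proof.
move=> Hf HG k u u'; rewrite (TE HG (Hf k u u')) big_cat big_map /= scaler_sumr.
congr (_ + _); apply: eq_bigr => p _; case: HG => H1 _; exact: (plinZ (H1 _)).
Qed.

Lemma plin_tsum2 U V W Z (T : lmodType K) (f : U -> V -> tens W Z) (G : W -> Z -> T) (v : V) :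
  tbilinear f -> bilin G -> plinear (fun u => \sum_(p <- f u v) G p.1 p.2).
Proof. by move=> [H1 H2] HG; apply: plin_tsum => // k u u'; apply: H1. Qed.

Lemma plin_tsum2r U V W Z (T : lmodType K) (f : U -> V -> tens W Z) (G : W -> Z -> T) (u : U) :
  tbilinear f -> bilin G -> plinear (fun v => \sum_(p <- f u v) G p.1 p.2).
Proof. by move=> [H1 H2] HG; apply: plin_tsum => // k v v'; apply: H2. Qed.

End Comb.

Section Main.
Local Unset Implicit Arguments.
Variables (K : fieldType) (I : Type) (C : I -> I -> lmodType K)
  (delta : forall X Y Z, C X Z -> tens (C Y Z) (C X Y))
  (eps : forall X, {linear C X X -> K^o}) (A : falgType K)
  (psi : forall X Y, C X Y -> A -> tens A (C X Y))
  (gamma : forall X, 'Hom(A, K^o) -> C X X -> A).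
Hypotheses (coalg : is_coalgebra K I C delta eps)
  (ent : is_entwining K I C delta eps A psi)
  (coint : is_normalized_cointegral K I C delta eps A psi gamma).

Local Notation rho := (cm_rho K I C delta eps).
Local Notation act := (em_act K I C delta eps A psi).
Local Notation emodT := (emod K I C delta eps A psi).
Local Notation ab := (abas K A).
Local Notation ad := (adual K A).
Local Notation nA := (dimA K A).

Variables (M M' : emodT) (i : forall X, M X -> M' X) (r : forall X, M' X -> M X).
Hypotheses (hi : emod_hom K I C delta eps A psi M M' i)
  (hr : comod_hom K I C delta eps M' M r) (ri : forall X (m : M X), r X (i X m) = m).

Definition Bk X (u : M' X) (c : C X X) : M X :=
  \sum_(j <- enum 'I_nA) act M X (r X (act M' X u (ab j))) (gamma X (ad j) c).
Definition rt X (m : M' X) : M X := \sum_(p <- rho M' X X m) Bk X p.1 p.2.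

Lemma actl (N : emodT) X a : plinear (fun m : N X => act N X m a).
Proof. exact: em_act_linl. Qed.
Lemma actr (N : emodT) X (m : N X) : plinear (act N X m).
Proof. exact: em_act_linr. Qed.

Lemma rho_counit (N : emodT) X (m : N X) :
  \sum_(p <- rho N X X m) (eps X p.2 : K) *: p.1 = m.
Proof. exact: cm_rho_counit. Qed.
Lemma rho_lin (N : emodT) X Y : tlinear (rho N X Y).
Proof. exact: cm_rho_lin. Qed.
Lemma rho_coassoc (N : emodT) X Z Y (m : N X) :
    teq3 [seq (q.1, q.2, p.2) | p <- rho N X Z m, q <- rho N Z Y p.1]
         [seq (p.1, q.1, q.2) | p <- rho N X Y m, q <- delta X Z Y p.2].
Proof. exact: cm_rho_coassoc. Qed.
Lemma compat (N : emodT) X Y (m : N X) (a : A) :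
    teq (rho N X Y (act N X m a))
        [seq (act N Y p.1 q.1, q.2) | p <- rho N X Y m, q <- psi X Y p.2 a].
Proof. exact: em_compat. Qed.
Lemma actM (N : emodT) X (m : N X) a b : act N X (act N X m a) b = act N X m (a * b).
Proof. exact: em_actM. Qed.
Lemma act1 (N : emodT) X (m : N X) : act N X m 1 = m.
Proof. exact: em_act1. Qed.

Lemma r_lin X : plinear (r X). Proof. exact: hr.1. Qed.
Lemma gam_lin X j : plinear (gamma X j). Proof. exact: coint.2.1. Qed.

Lemma Bk_bilin X : bilin (Bk X).
Proof.
split=> [c|u]; apply: plin_sumf => j.
  by move=> k x y; rewrite (actl M' X) (r_lin X) (actl M X).
by move=> k x y; rewrite (gam_lin X) (actr M X).
Qed.

Lemma rt_lin X : plinear (rt X).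
Proof. apply: plin_tsum; [exact: rho_lin | exact: Bk_bilin]. Qed.

Lemma sum_abas X (c : C X X) :
  \sum_(j <- enum 'I_nA) ab j * gamma X (ad j) c = (eps X c : K) *: 1.
Proof. by rewrite -coint.2.2.2.2 big_enum. Qed.

Lemma rt_i X (m : M X) : rt X (i X m) = m.
Proof.
rewrite /rt (TE (Bk_bilin X) (hi.1.2 X X m)) big_map /=.
rewrite -[RHS](rho_counit M X m); apply: eq_bigr => p _.
rewrite /Bk.
under eq_bigr do rewrite -hi.2 ri actM.
rewrite -(plin_sum _ _ _ (actr _ _ _)) sum_abas.
by rewrite (plinZ (actr _ _ _)) act1.
Qed.

Lemma rt_act X (m : M' X) a : rt X (act M' X m a) = act M X (rt X m) a.
Proof.
rewrite /rt (TE (Bk_bilin X) (compat M' X X m a)) big_allpairs_dep /=.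
rewrite (plin_sum _ _ _ (actl M X a)); apply: eq_bigr => p _.
rewrite /Bk (plin_sum _ _ _ (actl M X a)).
under eq_bigr do under eq_bigr do rewrite actM.
under [RHS]eq_bigr do rewrite actM.
pose G (x : A) (y : A) := act M X (r X (act M' X p.1 x)) y.
have HG : bilin G.
  split=> [y|x] k u u'; rewrite /G; last by rewrite (actr M X).
  by rewrite (actr M' X) (r_lin X) (actl M X).
have := TE HG (coint.2.2.2.1 X p.2 a).
rewrite big_map big_allpairs_dep /G /= => ->.
by [].
Qed.

Section Comodhom.
Variables (X Y : I) (phi : {linear M Y -> K^o}) (chi : {linear C X Y -> K^o}).

Definition G0 (x : M Y) (c : C X Y) : K^o := (phi x : K) * chi c.
Lemma G0_bilin : bilin G0.
Proof.
split=> [c|x]; [apply: plin_mulr; exact: plin_lin | apply: plin_mull; exact: plin_lin].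
Qed.

Definition Phi (n : M X) : K^o := \sum_(u <- rho M X Y n) G0 u.1 u.2.
Lemma Phi_lin : plinear Phi.
Proof. apply: plin_tsum; [exact: rho_lin | exact: G0_bilin]. Qed.

Definition H (x : M Y) (c : C X Y) (b : A) : K^o :=
  \sum_(w <- psi X Y c b) G0 (act M Y x w.1) w.2.

Lemma H_lin1 c b : plinear (fun x => H x c b).
Proof.
apply: plin_sumf => w; rewrite /G0; apply: plin_mulr.
by move=> k x y; rewrite (actl M Y) linearP.
Qed.

Lemma G1_bilin x : bilin (fun y d => G0 (act M Y x y) d).
Proof.
rewrite /G0; split=> [d|y]; last by apply: plin_mull; exact: plin_lin.
by apply: plin_mulr => k y y'; rewrite (actr M Y) linearP.
Qed.

Lemma H_lin2 x b : plinear (fun c => H x c b).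
Proof. by apply: (plin_tsum2 (G := fun y d => G0 (act M Y x y) d)); [exact: ent.1 | exact: G1_bilin]. Qed.

Lemma H_lin3 x c : plinear (H x c).
Proof. by apply: (plin_tsum2r (G := fun y d => G0 (act M Y x y) d)); [exact: ent.1 | exact: G1_bilin]. Qed.

Lemma Phi_act (n : M X) b :
  Phi (act M X n b) = \sum_(v <- rho M X Y n) H v.1 v.2 b.
Proof. by rewrite /Phi (TE G0_bilin (compat M X Y n b)) big_allpairs_dep. Qed.

Lemma Phi_act_r (n : M' X) b :
  Phi (act M X (r X n) b) = \sum_(v <- rho M' X Y n) H (r Y v.1) v.2 b.
Proof.
rewrite Phi_act.
have HB : bilin (fun x c => H x c b) by split=> [c|x]; [exact: H_lin1 | exact: H_lin2].
by rewrite (TE HB (hr.2 X Y n)) big_map.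
Qed.

Lemma Phi_act_r_act (n : M' X) a b :
  Phi (act M X (r X (act M' X n a)) b) =
  \sum_(y <- rho M' X Y n) \sum_(z <- psi X Y y.2 a) H (r Y (act M' Y y.1 z.1)) z.2 b.
Proof.
rewrite Phi_act_r.
have HB : bilin (fun x c => H (r Y x) c b).
  split=> [c|x]; last exact: H_lin2.
  by move=> k u u'; rewrite (r_lin Y) H_lin1.
by rewrite (TE HB (compat M' X Y n a)) big_allpairs_dep.
Qed.

Definition T (u : M' Y) (c : C X Y) (d : C X X) : K^o :=
  \sum_(j <- enum 'I_nA) \sum_(z <- psi X Y c (ab j))
     H (r Y (act M' Y u z.1)) z.2 (gamma X (ad j) d).
Definition S (u : M' Y) (c : C Y Y) (d : C X Y) : K^o :=
  \sum_(j <- enum 'I_nA) G0 (act M Y (r Y (act M' Y u (ab j))) (gamma Y (ad j) c)) d.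
Definition F (u : M' Y) (x y : A) (c : C X Y) : K^o :=
  G0 (act M Y (r Y (act M' Y u x)) y) c.

Lemma T_tri : trilin T.
Proof.
split; [|split].
- move=> c d; apply: plin_sumf => j; apply: plin_sumf => z.
  by move=> k u1 u2; rewrite (actl M' Y) (r_lin Y) H_lin1.
- move=> u d; apply: plin_sumf => j.
  apply: (plin_tsum2 (G := fun x c' => H (r Y (act M' Y u x)) c' (gamma X (ad j) d))).
    exact: ent.1.
  split=> [c'|x]; last exact: H_lin2.
  by move=> k x1 x2; rewrite (actr M' Y) (r_lin Y) H_lin1.
- move=> u c; apply: plin_sumf => j; apply: plin_sumf => z.
  by move=> k d1 d2; rewrite (gam_lin X) H_lin3.
Qed.

Lemma S_tri : trilin S.
Proof.
split; [|split].
- move=> c d; apply: plin_sumf => j; rewrite /G0; apply: plin_mulr => k u1 u2.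
  by rewrite (actl M' Y) (r_lin Y) (actl M Y) linearP.
- move=> u d; apply: plin_sumf => j; rewrite /G0; apply: plin_mulr => k c1 c2.
  by rewrite (gam_lin Y) (actr M Y) linearP.
- move=> u c; apply: plin_sumf => j; rewrite /G0; apply: plin_mull; exact: plin_lin.
Qed.

Lemma F_tri u : trilin (F u).
Proof.
split; [|split].
- move=> y c; rewrite /F /G0; apply: plin_mulr => k x1 x2.
  by rewrite (actr M' Y) (r_lin Y) (actl M Y) linearP.
- move=> x c; rewrite /F /G0; apply: plin_mulr => k y1 y2.
  by rewrite (actr M Y) linearP.
- move=> x y; rewrite /F /G0; apply: plin_mull; exact: plin_lin.
Qed.

Lemma rt_comod_eq (m : M' X) :
  \sum_(p <- rho M X Y (rt X m)) (phi p.1 : K) * chi p.2 =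
  \sum_(p <- [seq (rt Y p.1, p.2) | p <- rho M' X Y m]) (phi p.1 : K) * chi p.2.
Proof.
have -> : \sum_(p <- rho M X Y (rt X m)) (phi p.1 : K) * chi p.2 = Phi (rt X m) by [].
rewrite /rt (plin_sum _ _ _ Phi_lin).
under eq_bigr do rewrite /Bk (plin_sum _ _ _ Phi_lin).
under eq_bigr do under eq_bigr do rewrite Phi_act_r_act.
under eq_bigr do rewrite exchange_big /=.
rewrite [LHS](_ : _ = \sum_(t <- [seq (q.1, q.2, p.2) | p <- rho M' X X m, q <- rho M' X Y p.1])
   T t.1.1 t.1.2 t.2); last by rewrite big_allpairs_dep.
rewrite (TE3 T_tri (rho_coassoc M' X X Y m)) big_allpairs_dep /=.
rewrite big_map /=.
rewrite [RHS](_ : _ = \sum_(t <- [seq (q.1, q.2, p.2) | p <- rho M' X Y m, q <- rho M' Y Y p.1])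
   S t.1.1 t.1.2 t.2); last first.
  rewrite big_allpairs_dep; apply: eq_bigr => p _.
  rewrite linear_sum mulr_suml; apply: eq_bigr => q _.
  by rewrite /Bk /S linear_sum mulr_suml.
rewrite (TE3 S_tri (rho_coassoc M' X Y Y m)) big_allpairs_dep /=.
apply: eq_bigr => p _.
have := TE3 (F_tri p.1) (coint.2.2.1 X Y p.2).
rewrite big_flatten big_map /= big_allpairs_dep /= exchange_big /=.
under eq_bigr do rewrite big_flatten big_map /=.
under eq_bigr do under eq_bigr do rewrite big_allpairs_dep /=.
move=> E; exact: E.
Qed.

End Comodhom.

Lemma rt_emod_hom : emod_hom K I C delta eps A psi M' M rt.
Proof.
split; last by move=> X m a; exact: rt_act.
split; first exact: rt_lin.
move=> X Y m phi chi; exact: rt_comod_eq.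
Qed.

End Main.

Section Comp.
Local Unset Implicit Arguments.
Variables (K : fieldType) (I : Type) (C : I -> I -> lmodType K)
  (delta : forall X Y Z, C X Z -> tens (C Y Z) (C X Y))
  (eps : forall X, {linear C X X -> K^o}) (A : falgType K)
  (psi : forall X Y, C X Y -> A -> tens A (C X Y)).
Local Notation rho := (cm_rho K I C delta eps).
Local Notation emodT := (emod K I C delta eps A psi).

Lemma emod_hom_comp (M1 M2 M3 : emodT) (h1 : forall X, M1 X -> M2 X) (h2 : forall X, M2 X -> M3 X) :
  emod_hom K I C delta eps A psi M1 M2 h1 -> emod_hom K I C delta eps A psi M2 M3 h2 ->
  emod_hom K I C delta eps A psi M1 M3 (fun X m => h2 X (h1 X m)).
Proof.
move=> [[l1 c1] a1] [[l2 c2] a2]; split; last by move=> X m a; rewrite a1 a2.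
split; first by move=> X; exact: plin_comp.
move=> X Y m phi chi.
rewrite (c2 X Y (h1 X m) phi chi) !big_map /=.
have HB : bilin (fun (x : M2 Y) (c : C X Y) => ((phi (h2 Y x) : K) * chi c : K^o)).
  split=> [c|x]; last by apply: plin_mull; exact: plin_lin.
  by apply: plin_mulr => k u u'; rewrite (l2 Y) linearP.
by rewrite (TE HB (c1 X Y m)) big_map.
Qed.
End Comp.


Theorem theorem7p8 (K : fieldType) (I : Type) (C : I -> I -> lmodType K)
    (delta : forall X Y Z, C X Z -> tens (C Y Z) (C X Y))
    (eps : forall X, {linear C X X -> K^o})
    (A : falgType K) (psi : forall X Y, C X Y -> A -> tens A (C X Y)) :
  is_coalgebra K I C delta eps ->
  is_entwining K I C delta eps A psi ->
  (exists gamma : forall X, 'Hom(A, K^o) -> C X X -> A,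
      is_normalized_cointegral K I C delta eps A psi gamma) ->
  Gpsi_semisimple K I C delta eps A psi /\ Gpsi_Maschke K I C delta eps A psi.
Proof.
move=> coalg ent [gamma coint]; split.
- move=> M1 M2 M3 f g hf hg _ [r [hr rf]].
  exists (rt K I C delta eps A psi gamma M1 M2 r); split.
    exact: rt_emod_hom.
  by move=> X m; apply: rt_i.
- move=> M M' N i f hi hf [r [hr ri]].
  exists (fun X m => f X (rt K I C delta eps A psi gamma M M' r X m)); split.
    by apply: emod_hom_comp; [exact: rt_emod_hom | exact: hf].
  by move=> X m /=; rewrite rt_i.
Qed.
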